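(* Let $\mathcal{G}$ be a network with non-monitor set $N$ and set of measurement paths $P$, let $S\subseteq N$ and $k\ge1$. (a) If for every failure set $F\subseteq N$ with $|F|\le k$ and every node $v\in S\setminus F$ there exists $p\in P$ traversing $v$ but none of the nodes of $F$, then $S$ is $k$-identifiable. (b) If $S$ is $k$-identifiable, then for every failure set $F\subseteq N$ with $|F|\le k-1$ and every node $v\in S\setminus F$ there exists $p\in P$ traversing $v$ but none of the nodes of $F$.
   Context: $\mathcal{G}$ is a finite connected undirected graph whose node set is partitioned into monitors $M$ and non-monitors $N$; $P$ is an arbitrary set of measurement paths. A failure set is any $F\subseteq N$; a path fails iff it traverses a node of $F$. $P_F$ is the set of paths in $P$ traversing at least one node of $F$; $F_1,F_2$ are distinguishable iff $P_{F_1}\ne P_{F_2}$. $S\subseteq N$ is $k$-identifiable if any two failure sets $F_1,F_2$ with $|F_1|,|F_2|\le k$ and $F_1\cap S\ne F_2\cap S$ are distinguishable. *)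

(* Defs.v *)
From mathcomp Require Import all_boot.
Set Implicit Arguments. Unset Strict Implicit. Unset Printing Implicit Defensive.

(* A network: finite connected simple undirected graph on node type V with
   adjacency relation e; node set partitioned into monitors M and
   non-monitors N := ~: M. *)
Definition simple_graph (V : finType) (e : rel V) : Prop :=
  symmetric e /\ irreflexive e.

Definition connected_graph (V : finType) (e : rel V) : Prop :=
  forall x y : V, connect e x y.

Definition nonmonitors (V : finType) (M : {set V}) : {set V} := ~: M.

Definition is_graph_path (V : finType) (e : rel V) (p : seq V) : Prop :=
  match p with
  | [::] => False
  | x :: q => path e x q && uniq p
  end.

Definition traverses (V : finType) (p : seq V) (v : V) : bool := v \in p.

Definition failed_paths (V : finType) (P : seq (seq V)) (F : {set V}) :
  seq (seq V) := [seq p <- P | has (fun v => v \in F) p].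

Definition distinguishable (V : finType) (P : seq (seq V)) (F1 F2 : {set V}) :
  Prop := failed_paths P F1 <> failed_paths P F2.

Definition k_identifiable (V : finType) (M : {set V}) (P : seq (seq V))
  (k : nat) (S : {set V}) : Prop :=
  forall F1 F2 : {set V},
    F1 \subset nonmonitors M -> F2 \subset nonmonitors M ->
    #|F1| <= k -> #|F2| <= k ->
    F1 :&: S != F2 :&: S ->
    distinguishable P F1 F2.

Definition separating_condition (V : finType) (M : {set V}) (P : seq (seq V))
  (m : nat) (S : {set V}) : Prop :=
  forall F : {set V}, F \subset nonmonitors M -> #|F| <= m ->
    forall v : V, v \in S :\: F ->
      exists2 p, p \in P & traverses p v && ~~ has (fun u => u \in F) p.

(* Main.v *)
Require Import Defs.
From mathcomp Require Import all_boot.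

Lemma sep_dist (V : finType) (P : seq (seq V)) (F1 F2 : {set V}) p v :
  p \in P -> v \in p -> v \in F1 -> ~~ has (fun u => u \in F2) p ->
  distinguishable P F1 F2.
Proof.
move=> pP vp vF1 nh E.
have h1 : p \in failed_paths P F1.
  by rewrite mem_filter pP andbT; apply/hasP; exists v.
by move: h1; rewrite E mem_filter (negbTE nh).
Qed.

Theorem lemma1 (V : finType) (e : rel V) (M : {set V}) (P : seq (seq V))
  (S : {set V}) (k : nat) :
  simple_graph e -> connected_graph e ->
  (forall p, p \in P -> is_graph_path e p) ->
  S \subset nonmonitors M -> 1 <= k ->
  (separating_condition M P k S -> k_identifiable M P k S) /\
  (k_identifiable M P k S -> separating_condition M P k.-1 S).
Proof.
move=> _ _ _ SN k1; split.
- move=> sep F1 F2 s1 s2 c1 c2 ne.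
  have [v] : exists v, (v \in F1 :&: S) != (v \in F2 :&: S).
    apply/existsP; apply: contraR ne => /existsPn H; apply/eqP/setP => x.
    by have := H x; rewrite negbK => /eqP.
  rewrite !inE.
  case vS: (v \in S); rewrite ?andbT ?andbF //.
  case v1: (v \in F1); case v2: (v \in F2) => // _.
  + have [|p pP /andP[vp nh]] := sep F2 s2 c2 v; first by rewrite !inE v2 vS.
    exact: sep_dist pP vp v1 nh.
  + have [|p pP /andP[vp nh]] := sep F1 s1 c1 v; first by rewrite !inE v1 vS.
    by move=> E; apply: (@sep_dist _ P F2 F1 _ _ pP vp v2 nh); rewrite E.
- move=> kid F sF cF v; rewrite !inE => /andP[vF vS].
  case: (boolP [exists p : 'I_(size P),
    traverses (nth [::] P p) v && ~~ has (fun u => u \in F) (nth [::] P p)]).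
  + case/existsP=> i hi; exists (nth [::] P i) => //; exact: mem_nth.
  + move/existsPn=> H; exfalso.
    have vN : v \in nonmonitors M by apply: (subsetP SN).
    have : distinguishable P F (v |: F).
      apply: kid => //.
      * by apply/subsetP => x; rewrite in_setU1 => /orP[/eqP->|/(subsetP sF)].
      * by apply: leq_trans cF _; rewrite leq_pred.
      * by rewrite cardsU1 (negbTE vF) /= add1n -(prednK k1) ltnS.
      * apply/eqP=> E; have : v \in (v |: F) :&: S by rewrite !inE eqxx vS.
        by rewrite -E !inE (negbTE vF).
    apply; apply: eq_in_filter => p pP.
    have [i -> ] : exists i : 'I_(size P), p = nth [::] P i.
      by exists (Ordinal (n:=size P) (m:=index p P) (etrans (index_mem p P) pP)) ; rewrite /= nth_index ?mem_index.
    have := H i; rewrite negb_and negbK /traverses.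
    case: (boolP (v \in nth [::] P i)) => /= vp hF.
    * rewrite hF; apply/esym/hasP; exists v => //; by rewrite !inE eqxx.
    * apply: eq_in_has => u up; rewrite !inE.
      by case: eqP => // eu; move: vp; rewrite -eu up.
Qed.
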